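(* Let $A$ be a differential $K$-algebra without exponents nor logarithm and let $M$ be a regular singular differential module over $A$ of rank $n$. If $G$ and $G'$ are matrices of the connection of $M$ in two $A$-bases of $M$, both with all entries in $K$, then the multisets of eigenvalues (with multiplicity) of $G$ and $G'$ have the same image in $K/\mathbb{Z}$. Consequently this image multiset (the multiset of exponents $\mathrm{Exp}(M)\subset K/\mathbb{Z}$) is an isomorphism invariant of $M$.
   Context: $K$ is an algebraically closed field of characteristic $0$. $K[t^K]$ is the group algebra over $K$ of $(K,+)$, with $K$-basis $t^a$ ($a\in K$), $t^at^b=t^{a+b}$; $K[t,t^{-1}]$ is identified with the span of $t^n$, $n\in\mathbb{Z}$. Fix a set $\widetilde{K/\mathbb{Z}}\subset K$ of representatives of $K/\mathbb{Z}$ with $0\in\widetilde{K/\mathbb{Z}}$. $A$ is a commutative ring with unit containing $K[t,t^{-1}]$ as a subring, with a derivation $\partial$ extending $t\frac{d}{dt}$. $A[t^K]:=A\otimes_{K[t,t^{-1}]}K[t^K]$, $E_A:=A[t^K][\ell]$ ($\ell$ an indeterminate), with derivation $\partial$ extending that of $A$, $\partial(t^a)=at^a$, $\partial(\ell)=1$. $A$ is a differential $K$-algebra without exponents nor logarithm if $\{f\in A:\partial^2 f=0\}=K$ and, for every $a\in\widetilde{K/\mathbb{Z}}\setminus\{0\}$, $\partial f+af=0$ ($f\in A$) implies $f=0$. A differential module over a differential ring $(B,\partial)$ is a $B$-module $M$ with additive $\nabla$ satisfying $\nabla(fm)=\partial(f)m+f\nabla(m)$; it is trivial if isomorphic to a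 direct sum of copies of $(B,\partial)$. If $M$ is free with basis $b_1,\dots,b_n$ and $\nabla(b_i)=\sum_j g_{j,i}b_j$, the matrix of the connection in this basis is $G=(g_{i,j})$. $M$ is regular singular if $M$ is finite free over $A$ and $M\otimes_AE_A$ (connection $\nabla\otimes1+1\otimes\partial$) is trivial as a differential module over $E_A$. *)

(* Defs.v *)
From HB Require Import structures.
From mathcomp Require Import all_boot all_order all_algebra.
Set Implicit Arguments.
Unset Strict Implicit.
Unset Printing Implicit Defensive.
Import Order.TTheory GRing.Theory Num.Theory.
Local Open Scope ring_scope.

Section Setting.
Variables (K : fieldType) (A : comAlgType K).

Definition tpow (t ti : A) (n : int) : A :=
  match n with Posz m => t ^+ m | Negz m => ti ^+ m.+1 end.

(* K[t,t^{-1}] is a subring of A: t is a unit (inverse ti) and the map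
   K[t,t^{-1}] -> A is injective (equivalently: t is transcendental over K). *)
Definition laurent_subring (t ti : A) : Prop :=
  t * ti = 1 /\
  forall p : {poly K}, (map_poly (in_alg A) p).[t] = 0 -> p = 0.

Definition derivation_ext (t : A) (d : A -> A) : Prop :=
  [/\ forall x y, d (x + y) = d x + d y,
      forall x y, d (x * y) = d x * y + x * d y,
      forall c : K, d (c%:A) = 0
    & d t = t].

(* A fixed set of representatives of K/Z containing 0, given by the map
   rep : K -> K sending x to the representative of x + Z, together with
   ip : K -> int with x = rep x + ip x. *)
Definition reps_KZ (rep : K -> K) (ip : K -> int) : Prop :=
  [/\ forall x, x = rep x + (ip x)%:~R,
      forall x (z : int), rep (x + z%:~R) = rep x
    & rep 0 = 0].

Definition no_exp_no_log (rep : K -> K) (d : A -> A) : Prop :=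
  (forall f : A, d (d f) = 0 <-> exists c : K, f = c%:A) /\
  (forall (a : K) (f : A), rep a = a -> a != 0 -> d f + a *: f = 0 -> f = 0).

(* E_A = A[t^K][l].  Since A[t^K] = A (x)_{K[t,t^-1]} K[t^K] is free   *)
(* over A with basis the t^c, c a representative, E_A is presented as  *)
(* formal sums  sum_i p_i t^{a_i}  (p_i in A[l] = {poly A}, a_i in K)  *)
(* modulo the relations t^{c+n} = t^n t^c  (n in Z).  Two formal sums  *)
(* are equal in E_A iff their coefficients on each t^c agree.          *)

Definition Esum := seq (K * {poly A}).

Section E.
Variables (t ti : A) (d : A -> A) (rep : K -> K) (ip : K -> int).

Definition Ecoef (e : Esum) (c : K) : {poly A} :=
  \sum_(x <- e | rep x.1 == c) (tpow t ti (ip x.1))%:P * x.2.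

Definition Eeq (e1 e2 : Esum) : Prop := forall c, Ecoef e1 c = Ecoef e2 c.

Definition Eadd (e1 e2 : Esum) : Esum := e1 ++ e2.
Definition Emul (e1 e2 : Esum) : Esum :=
  [seq (x.1 + y.1, x.2 * y.2) | x <- e1, y <- e2].
Definition Ezero : Esum := [::].
Definition Eone : Esum := [:: (0, 1)].
Definition EofA (f : A) : Esum := [:: (0, f%:P)].

(* derivation on A[l]: d on coefficients, d l = 1 *)
Definition polyder (p : {poly A}) : {poly A} := map_poly d p + p^`().
Definition Eder (e : Esum) : Esum :=
  [seq (x.1, polyder x.2 + (x.1%:A)%:P * x.2) | x <- e].

Definition Emx n := 'I_n -> 'I_n -> Esum.
Definition Emxmul n (X Y : Emx n) : Emx n :=
  fun i j => foldr Eadd Ezero [seq Emul (X i k) (Y k j) | k <- enum 'I_n].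
Definition Emx_eq n (X Y : Emx n) : Prop := forall i j, Eeq (X i j) (Y i j).
Definition Emx1 n : Emx n := fun i j => if i == j then Eone else Ezero.

(* The differential module E_A^n with connection matrix G (entries in A):
   nabla(sum_i y_i e_i) = sum_i d(y_i) e_i + sum_i y_i sum_j G j i e_j.
   It is trivial iff it has a basis of horizontal elements, i.e. there is
   an invertible matrix Y over E_A with  d Y + G Y = 0 . *)
Definition Etrivial n (G : 'M[A]_n) : Prop :=
  exists Y Z : Emx n,
    [/\ Emx_eq (Emxmul Y Z) (@Emx1 n),
        Emx_eq (Emxmul Z Y) (@Emx1 n)
      & forall j k,
          Eeq (Eadd (Eder (Y j k))
                    (foldr Eadd Ezero [seq Emul (EofA (G j i)) (Y i k) | i <- enum 'I_n]))
              Ezero].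
End E.

Definition diff_module (M : lmodType A) (d : A -> A) (nabla : M -> M) : Prop :=
  (forall x y, nabla (x + y) = nabla x + nabla y) /\
  (forall (f : A) (m : M), nabla (f *: m) = d f *: m + f *: nabla m).

Definition is_basis (M : lmodType A) n (b : 'I_n -> M) : Prop :=
  (forall m : M, exists c : 'I_n -> A, m = \sum_i c i *: b i) /\
  (forall c : 'I_n -> A, \sum_i c i *: b i = 0 -> forall i, c i = 0).

Definition conn_matrix (M : lmodType A) n (nabla : M -> M) (b : 'I_n -> M)
  (G : 'M[A]_n) : Prop :=
  forall i, nabla (b i) = \sum_j G j i *: b j.

(* M is regular singular: M is finite free over A and M (x)_A E_A is trivial;
   via a basis b of M, M (x)_A E_A is identified with E_A^n with connection
   matrix the matrix of nabla in b. *)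
Definition regular_singular (t ti : A) (d : A -> A) (rep : K -> K) (ip : K -> int)
  (M : lmodType A) (nabla : M -> M) : Prop :=
  exists n (b : 'I_n -> M) (G : 'M[A]_n),
    [/\ is_basis b, conn_matrix nabla b G & Etrivial t ti d rep ip G].

End Setting.

(* Main.v *)
Require Import Defs.
From HB Require Import structures.
From mathcomp Require Import all_boot all_order all_algebra.
From mathcomp Require Import ring.
Import GRing.Theory.
Local Open Scope ring_scope.
Set Implicit Arguments.
Unset Strict Implicit.

Section Der.
Variables (K : fieldType) (A : comAlgType K) (t ti : A) (d : A -> A).
Hypothesis hd : derivation_ext t d.

Lemma dD x y : d (x + y) = d x + d y. Proof. by case: hd. Qed.
Lemma dM x y : d (x * y) = d x * y + x * d y. Proof. by case: hd. Qed.
Lemma dC (c : K) : d c%:A = 0. Proof. by case: hd. Qed.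
Lemma dt : d t = t. Proof. by case: hd. Qed.
Lemma d0 : d 0 = 0.
Proof. have h := dD 0 0; rewrite addr0 in h; by apply: (addrI (d 0)); rewrite -h addr0. Qed.
Lemma dN x : d (- x) = - d x.
Proof. by apply/eqP; rewrite -subr_eq0 opprK -dD addNr d0. Qed.
Lemma dsum I (r : seq I) (P : pred I) (F : I -> A) :
  d (\sum_(i <- r | P i) F i) = \sum_(i <- r | P i) d (F i).
Proof. exact: (big_morph d dD d0). Qed.
Lemma dZ (c : K) x : d (c *: x) = c *: d x.
Proof. by rewrite -[c *: x]mulr_algl -[c *: d x]mulr_algl dM dC mul0r add0r. Qed.
Lemma d1 : d 1 = 0.
Proof. by rewrite -(scale1r (1 : A)) dC. Qed.
Lemma dX x (c : K) k : d x = c *: x -> d (x ^+ k) = (c *+ k) *: x ^+ k.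
Proof.
move=> hx; elim: k => [|k IH]; first by rewrite expr0 d1 mulr0n scale0r.
by rewrite exprS dM IH hx -scalerAl -scalerAr -scalerDl mulrS.
Qed.

Hypothesis htti : t * ti = 1.
Lemma dti : d ti = - ti.
Proof.
have h : d (t * ti) = 0 by rewrite htti d1.
rewrite dM dt htti in h.
have h2 : t * d ti = -1 by apply/eqP; rewrite -addr_eq0 addrC h.
by rewrite -[d ti]mul1r -htti (mulrC t) -mulrA h2 mulrN1.
Qed.

Lemma unit_shift (m : int) : exists u v : A, u * v = 1 /\ d u = m%:~R *: u.
Proof.
case: m => k.
  exists (t ^+ k), (ti ^+ k); split; first by rewrite -exprMn htti expr1n.
  by rewrite (@dX t 1) ?scale1r ?dt // pmulrn.
exists (ti ^+ k.+1), (t ^+ k.+1); split; first by rewrite -exprMn mulrC htti expr1n.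
rewrite (@dX ti (-1)) ?dti ?scaleN1r // NegzE mulrNz mulNrn.
by [].
Qed.

Variables (rep : K -> K) (ip : K -> int).
Hypothesis hrep : reps_KZ rep ip.
Hypothesis hA : no_exp_no_log rep d.

Lemma scal_zero (nu : K) (f : A) : (forall z : int, nu != z%:~R) ->
  d f = nu *: f -> f = 0.
Proof.
move=> hnu hf.
case: hrep => hdec hsh _.
set a := rep (- nu); set m := ip (- nu).
have E : - nu = a + m%:~R by exact: hdec.
have [u [v [huv hu]]] := unit_shift m.
have hg : d (u * f) + a *: (u * f) = 0.
  rewrite dM hu hf -scalerAl -scalerAr -!scalerDl.
  have -> : m%:~R + nu + a = 0.
    by rewrite (addrC _ a) addrA -E addNr.
  by rewrite scale0r.
have ha : rep a = a.
  by rewrite -[in LHS](hsh a m) -E.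
have a0 : a != 0.
  apply/eqP=> a0; move: (hnu (- m)).
  by rewrite mulrNz -[nu]opprK E a0 add0r eqxx.
have := (proj2 hA) a (u * f) ha a0 hg => h0.
by rewrite -[f]mul1r -huv (mulrC u) -mulrA h0 mulr0.
Qed.
End Der.

Section MxDer.
Variables (K : fieldType) (A : comAlgType K) (t ti : A) (d : A -> A).
Hypothesis hd : derivation_ext t d.
Hypothesis hz : forall (nu : K) (f : A), (forall z : int, nu != z%:~R) ->
  d f = nu *: f -> f = 0.

Definition dm m n (X : 'M[A]_(m, n)) := map_mx d X.
Local Notation cst M := (map_mx (in_alg A) M).

Lemma dmM m n p (X : 'M[A]_(m, n)) (Y : 'M[A]_(n, p)) :
  dm (X *m Y) = dm X *m Y + X *m dm Y.
Proof.
apply/matrixP=> i j; rewrite !mxE (dsum hd) -big_split /=.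
by apply: eq_bigr => k _; rewrite (dM hd) !mxE.
Qed.

Lemma dmC m n (C : 'M[K]_(m, n)) : dm (cst C) = 0.
Proof. by apply/matrixP=> i j; rewrite !mxE (dC hd). Qed.

Lemma dmCM m n p (C : 'M[K]_(m, n)) (Y : 'M[A]_(n, p)) :
  dm (cst C *m Y) = cst C *m dm Y.
Proof. by rewrite dmM dmC mul0mx add0r. Qed.

Lemma dmMC m n p (C : 'M[K]_(n, p)) (Y : 'M[A]_(m, n)) :
  dm (Y *m cst C) = dm Y *m cst C.
Proof. by rewrite dmM dmC mulmx0 addr0. Qed.

Lemma mul_cst_scalar m n (c : K) (Z : 'M[A]_(m, n)) :
  cst (c%:M) *m Z = c%:A *: Z.
Proof. by rewrite map_scalar_mx mul_scalar_mx. Qed.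

Lemma mul_cst_scalar_r m n (c : K) (Z : 'M[A]_(m, n)) :
  Z *m cst (c%:M) = c%:A *: Z.
Proof. by rewrite map_scalar_mx mul_mx_scalar. Qed.

Lemma lemT n m (G : 'M[K]_n.+1) (mu : K) (l : seq K) (Y : 'M[A]_(n.+1, m)) :
  (forall la, la \in l -> forall z : int, mu - la != z%:~R) ->
  dm Y = cst (mu%:M - G) *m Y ->
  cst (horner_mx G (\prod_(la <- l) ('X - la%:P))) *m Y = 0 -> Y = 0.
Proof.
elim: l => [|la l IH] hl hY.
  by rewrite big_nil rmorph1 map_mx1 mul1mx.
rewrite big_cons rmorphM /= rmorphB /= horner_mx_X horner_mx_C => h0.
apply: IH.
- by move=> x hx; apply: hl; rewrite inE hx orbT.
- by [].
set H := horner_mx G _ in h0 *.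
set Z := cst H *m Y.
have hGZ : cst (G - la%:M) *m Z = 0.
  by rewrite /Z mulmxA -map_mxM -h0 mulmxE.
have hcomm : (mu%:M - G) *m H = H *m (mu%:M - G).
  have -> : mu%:M - G = horner_mx G (mu%:P - 'X).
    by rewrite rmorphB /= horner_mx_C horner_mx_X.
  exact: comm_horner_mx2.
have hdZ : dm Z = (mu - la)%:A *: Z.
  rewrite /Z dmCM hY mulmxA -map_mxM -hcomm map_mxM -mulmxA.
  have -> : mu%:M - G = (mu - la)%:M - (G - la%:M).
    by rewrite raddfB /= opprB addrA subrK.
  by rewrite map_mxB mulmxBl hGZ subr0 mul_cst_scalar.
clearbody Z; apply/matrixP=> i j; rewrite [RHS]mxE.
move: (hl la (mem_head _ _)) => hnz; apply: (hz hnz).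
by move/matrixP: hdZ => /(_ i j); rewrite !mxE mulr_algl.
Qed.

Lemma lemCore n (G G' : 'M[K]_n.+1) (l l' : seq K) (X : 'M[A]_n.+1) :
  (forall la mu, la \in l -> mu \in l' -> forall z : int, mu - la != z%:~R) ->
  dm X = X *m cst G' - cst G *m X ->
  cst (horner_mx G (\prod_(la <- l) ('X - la%:P))) *m X = 0 ->
  X *m cst (horner_mx G' (\prod_(mu <- l') ('X - mu%:P))) = 0 -> X = 0.
Proof.
move=> hll hX hL; elim: l' hll => [|mu l' IH] hll.
  by rewrite big_nil rmorph1 map_mx1 mulmx1.
rewrite big_cons mulrC rmorphM /= rmorphB /= horner_mx_X horner_mx_C => h0.
apply: IH.
  by move=> la x hla hx; apply: hll => //; rewrite inE hx orbT.
set H1 := horner_mx G' _ in h0 *.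
set Y := X *m cst H1.
have hYG : Y *m cst (G' - mu%:M) = 0.
  by rewrite /Y -mulmxA -map_mxM -h0 mulmxE.
have hYG' : Y *m cst G' = mu%:A *: Y.
  apply/eqP; rewrite -subr_eq0 -mul_cst_scalar_r -mulmxBr -map_mxB.
  by rewrite hYG.
have hc : H1 *m G' = G' *m H1.
  by move: (comm_horner_mx2 G' (\prod_(mu <- l') ('X - mu%:P)) 'X);
    rewrite horner_mx_X.
apply: (@lemT n n.+1 G mu l).
- by move=> la hla; apply: hll => //; exact: mem_head.
- rewrite /Y dmMC hX mulmxBl -mulmxA -map_mxM -hc map_mxM mulmxA.
  rewrite -/Y hYG' map_mxB mulmxBl mul_cst_scalar /Y -!mulmxA.
  by [].
- by rewrite /Y mulmxA hL mul0mx.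
Qed.
End MxDer.

Lemma prod_const_seq (R : comNzRingType) (I : Type) (s : seq I) (c : R) :
  \prod_(x <- s) c = c ^+ size s.
Proof. by elim: s => [|x s IH]; rewrite ?big_nil ?expr0 // big_cons IH exprS. Qed.

Lemma prod_opp_seq (R : comNzRingType) (I : Type) (s : seq I) (F : I -> R) :
  \prod_(x <- s) - F x = (-1) ^+ size s * \prod_(x <- s) F x.
Proof.
elim: s => [|x s IH]; rewrite ?big_nil ?expr0 ?mulr1 // !big_cons IH exprS.
ring.
Qed.

Lemma char_poly_eval (K : fieldType) n (G : 'M[K]_n) (mu : K) :
  (char_poly G).[mu] = \det (mu%:M - G).
Proof.
rewrite /char_poly -horner_evalE -(det_map_mx (horner_eval mu)); congr (\det _).
apply/matrixP=> i j; rewrite !mxE.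
change (('X *+ (i == j) - (G i j)%:P).[mu] = mu *+ (i == j) - G i j).
by case: (i == j); rewrite /= ?mulr1n ?mulr0n !hornerE.
Qed.

Lemma detH (K : closedFieldType) n (G : 'M[K]_n.+1) (s : seq K) :
  char_poly G = \prod_(x <- s) ('X - x%:P) ->
  forall p, \det (horner_mx G p) = \prod_(x <- s) p.[x].
Proof.
move=> hs p.
have sz : size s = n.+1.
  by move: (size_char_poly G); rewrite hs size_prod_XsubC => -[].
case: (closed_field_poly_normal p) => r hp.
rewrite [in LHS]hp linearZ /= detZ.
rewrite (eq_bigr (fun x => lead_coef p * \prod_(z <- r) (x - z))); last first.
  move=> x _; rewrite [in LHS]hp hornerZ horner_prod; congr (_ * _).
  by apply: eq_bigr => z _; rewrite hornerXsubC.
rewrite big_split /= prod_const_seq sz; congr (_ * _).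
rewrite exchange_big /=.
elim: r {hp} => [|z r IH].
  by rewrite !big_nil rmorph1 det1.
rewrite !big_cons rmorphM /= -mulmxE det_mulmx IH; congr (_ * _).
rewrite rmorphB /= horner_mx_X horner_mx_C.
have -> : G - z%:M = (-1) *: (z%:M - G) by rewrite scaleN1r opprB.
rewrite detZ -char_poly_eval hs horner_prod.
rewrite (eq_bigr (fun x => z - x)); last by move=> x _; rewrite hornerXsubC.
rewrite [RHS](eq_bigr (fun x => - (z - x))); last by move=> x _; rewrite opprB.
by rewrite prod_opp_seq sz.
Qed.

Section Count.
Variables (K : closedFieldType) (A : comAlgType K) (t ti : A) (d : A -> A).
Hypothesis hd : derivation_ext t d.
Hypothesis hz : forall (nu : K) (f : A), (forall z : int, nu != z%:~R) ->
  d f = nu *: f -> f = 0.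
Variables (n : nat) (G G' : 'M[K]_n.+1) (s s' : seq K).
Hypothesis hs : char_poly G = \prod_(x <- s) ('X - x%:P).
Hypothesis hs' : char_poly G' = \prod_(x <- s') ('X - x%:P).
Variables (P Q : 'M[A]_n.+1).
Hypothesis hPQ : P *m Q = 1%:M.
Hypothesis hP : dm d P = P *m map_mx (in_alg A) G' - map_mx (in_alg A) G *m P.

Local Notation cst M := (map_mx (in_alg A) M).

Lemma char_split (G0 : 'M[K]_n.+1) (s0 : seq K) (S : pred K) :
  char_poly G0 = \prod_(x <- s0) ('X - x%:P) ->
  horner_mx G0 (\prod_(x <- s0 | S x) ('X - x%:P)) *
  horner_mx G0 (\prod_(x <- s0 | ~~ S x) ('X - x%:P)) = 0.
Proof.
move=> h; rewrite -rmorphM /= -(bigID S predT) /=.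
by rewrite -h Cayley_Hamilton.
Qed.

Lemma comm_hor (G0 : 'M[K]_n.+1) p q :
  cst (horner_mx G0 p) *m cst (horner_mx G0 q) =
  cst (horner_mx G0 q) *m cst (horner_mx G0 p).
Proof. by rewrite -!map_mxM !mulmxE comm_horner_mx2. Qed.

Lemma vanish (S : pred K) (hS : forall y (z : int), S (y + z%:~R) = S y) :
  cst (horner_mx G (\prod_(x <- s | S x) ('X - x%:P))) *m P *m
  cst (horner_mx G' (\prod_(x <- s' | ~~ S x) ('X - x%:P))) = 0.
Proof.
set CL := horner_mx G _; set CR := horner_mx G' _.
apply: (@lemCore K A t d hd hz n G G' [seq x <- s | ~~ S x] [seq x <- s' | S x]).
- move=> la mu; rewrite !mem_filter => /andP[hla _] /andP[hmu _] z.
  apply/eqP=> e; move: hla; rewrite -(hS la z) -e addrC subrK hmu.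
  by [].
- rewrite (dmMC hd) (dmCM hd) hP mulmxBr mulmxBl.
  have hL : cst CL *m cst G = cst G *m cst CL.
    have hG : cst G = cst (horner_mx G 'X) by rewrite horner_mx_X.
    by rewrite hG comm_hor.
  have hR : cst G' *m cst CR = cst CR *m cst G'.
    have hG : cst G' = cst (horner_mx G' 'X) by rewrite horner_mx_X.
    by rewrite hG comm_hor.
  by rewrite -!mulmxA hR !mulmxA hL.
- rewrite big_filter !mulmxA -map_mxM.
  have -> : horner_mx G (\prod_(i <- s | ~~ S i) ('X - i%:P)) *m CL = 0.
    by rewrite mulmxE /CL comm_horner_mx2 char_split.
  by rewrite map_mx0 !mul0mx.
- rewrite big_filter -!mulmxA -map_mxM.
  have -> : CR *m horner_mx G' (\prod_(x <- s' | S x) ('X - x%:P)) = 0.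
    by rewrite mulmxE /CR comm_horner_mx2 char_split.
  by rewrite map_mx0 !mulmx0.
Qed.


Lemma coprime_split (s0 : seq K) (S : pred K) :
  coprimep (\prod_(x <- s0 | S x) ('X - x%:P)) (\prod_(x <- s0 | ~~ S x) ('X - x%:P)).
Proof.
set q := \prod_(x <- s0 | S x) _; set r := \prod_(x <- s0 | ~~ S x) _.
rewrite /coprimep; case e: (size (gcdp q r) == 1%N) => //.
have /closed_rootP [x] : size (gcdp q r) != 1%N by rewrite e.
rewrite root_gcd /q /r -(big_filter _ S) -(big_filter _ (fun x => ~~ S x)).
rewrite !root_prod_XsubC !mem_filter.
by case: (S x); rewrite ?andbF. 
Qed.

Lemma eval_e (s0 : seq K) (S : pred K) (u v : {poly K}) :
  u * (\prod_(x <- s0 | S x) ('X - x%:P)) + v * (\prod_(x <- s0 | ~~ S x) ('X - x%:P)) = 1 ->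
  forall x, x \in s0 ->
  (1 + v * \prod_(x <- s0 | ~~ S x) ('X - x%:P)).[x] = if S x then 2 else 1.
Proof.
move=> huv x hx.
have hq : (\prod_(x <- s0 | S x) ('X - x%:P)).[x] = 0 -> 
   (v * \prod_(x <- s0 | ~~ S x) ('X - x%:P)).[x] = 1.
  move=> h0; have := congr1 (fun p => p.[x]) huv.
  by rewrite hornerD hornerM h0 mulr0 add0r hornerC.
case hS: (S x).
  rewrite hornerD hq ?hornerC //.
  by apply/rootP; rewrite -big_filter root_prod_XsubC mem_filter hS.
rewrite hornerD hornerM.
have -> : (\prod_(x <- s0 | ~~ S x) ('X - x%:P)).[x] = 0.
  by apply/rootP; rewrite -big_filter root_prod_XsubC mem_filter hS.
by rewrite mulr0 addr0 hornerC.
Qed.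

Lemma prod_if2 (s0 : seq K) (S : pred K) :
  \prod_(x <- s0) (if S x then 2 else 1) = (2 : K) ^+ count S s0.
Proof. by rewrite -big_mkcond -big_filter prod_const_seq size_filter. Qed.

Lemma count_eq (S : pred K) (hS : forall y (z : int), S (y + z%:~R) = S y) :
  (2 : K) ^+ count S s = 2 ^+ count S s'.
Proof.
have /Bezout_eq1_coprimepP [[u v] /= huv] := coprime_split s S.
have /Bezout_eq1_coprimepP [[u' v'] /= huv'] := coprime_split s' S.
set q := \prod_(x <- s | S x) _ in huv *.
set r := \prod_(x <- s | ~~ S x) _ in huv *.
set q' := \prod_(x <- s' | S x) _ in huv' *.
set r' := \prod_(x <- s' | ~~ S x) _ in huv' *.
have V1 : cst (horner_mx G q) *m P *m cst (horner_mx G' r') = 0 by exact: vanish.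
have hC : forall y (z : int), predC S (y + z%:~R) = predC S y.
  by move=> y z /=; rewrite hS.
have V2 : cst (horner_mx G r) *m P *m cst (horner_mx G' q') = 0.
  have := vanish hC.
  rewrite (@eq_bigl _ _ _ _ s' (fun x => ~~ predC S x) S) //.
  by move=> x /=; rewrite negbK.
set E := horner_mx G (v * r).
set E' := horner_mx G' (v' * r').
have hE1 : 1 - E = horner_mx G (u * q).
  by rewrite /E -(rmorph1 (horner_mx G)) -rmorphB /= -huv addrK.
have hE1' : 1 - E' = horner_mx G' (u' * q').
  by rewrite /E' -(rmorph1 (horner_mx G')) -rmorphB /= -huv' addrK.
have I1 : cst E *m P *m cst (1 - E') = 0.
  rewrite hE1' mulrC /E !rmorphM /= -!mulmxE !mulmxA.
  rewrite -(mulmxA _ (cst (horner_mx G r))) -(mulmxA _ (cst (horner_mx G r) *m P)).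
  by rewrite V2 mulmx0 !mul0mx.
have I2 : cst (1 - E) *m P *m cst E' = 0.
  rewrite hE1 /E' (mulrC v') !rmorphM /= -!mulmxE !mulmxA.
  rewrite -(mulmxA _ (cst (horner_mx G q))) -(mulmxA _ (cst (horner_mx G q) *m P)).
  by rewrite V1 mulmx0 !mul0mx.
have hI : cst E *m P = P *m cst E'.
  move: I1 I2; rewrite !map_mxB !map_mx1 mulmxBr mulmx1 mulmxBl mulmxBl mul1mx.
  by move=> /eqP; rewrite subr_eq0 => /eqP <- /eqP; rewrite subr_eq0 => /eqP.
have hI2 : cst (1 + E) *m P = P *m cst (1 + E').
  by rewrite !map_mxD !map_mx1 mulmxDl mulmxDr mul1mx mulmx1 hI.
have hdet : \det (1 + E) = \det (1 + E').
  apply: (fmorph_inj (in_alg A)).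
  have hdQ : \det P * \det Q = 1 by rewrite -det_mulmx hPQ det1.
  have := congr1 (fun M => \det M * \det Q) hI2; rewrite /= !det_mulmx.
  rewrite -mulrA hdQ mulr1 (mulrC (\det P)) -mulrA hdQ mulr1.
  by rewrite !(det_map_mx (in_alg A)).
have e1 : 1 + E = horner_mx G (1 + v * r) by rewrite rmorphD rmorph1.
have e2 : 1 + E' = horner_mx G' (1 + v' * r') by rewrite rmorphD rmorph1.
rewrite e1 e2 (detH hs) (detH hs') in hdet; move: hdet.
rewrite (eq_big_seq (fun x => if S x then 2 else 1)); last first.
  by move=> x hx; apply: (eval_e huv).
rewrite [RHS](eq_big_seq (fun x => if S x then 2 else 1)); last first.
  by move=> x hx; apply: (eval_e huv').
by rewrite !prod_if2.
Qed.

End Count.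

Unset Implicit Arguments.
Set Strict Implicit.

Lemma basis_uniq (A : comNzRingType) (M : lmodType A) n (b : 'I_n -> M) :
  (forall c : 'I_n -> A, \sum_i c i *: b i = 0 -> forall i, c i = 0) ->
  forall c c' : 'I_n -> A, \sum_i c i *: b i = \sum_i c' i *: b i -> forall i, c i = c' i.
Proof.
move=> hb c c' h i; apply/eqP; rewrite -subr_eq0; apply/eqP.
apply: (hb (fun i => c i - c' i)).
rewrite (eq_bigr (fun i => c i *: b i - c' i *: b i)); last by move=> j _; rewrite scalerBl.
by rewrite sumrB h subrr.
Qed.

Lemma sum_swap (A : comNzRingType) (M : lmodType A) n (b : 'I_n -> M)
  (a : 'I_n -> A) (B : 'I_n -> 'I_n -> A) :
  \sum_k a k *: \sum_j B j k *: b j = \sum_j (\sum_k B j k * a k) *: b j.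
Proof.
under eq_bigr do rewrite scaler_sumr.
rewrite exchange_big /=; apply: eq_bigr => j _.
rewrite scaler_suml; apply: eq_bigr => k _.
by rewrite scalerA mulrC.
Qed.

Lemma natr_inj0 (K : fieldType) (hK : [pchar K] =i pred0) (a b : nat) :
  (a%:R : K) = b%:R -> a = b.
Proof.
have h0 := (proj1 (pcharf0P K) hK).
wlog le : a b / (b <= a)%N.
  move=> W h; case: (leqP b a) => hab; first exact: W.
  by symmetry; apply: W => //; exact: ltnW.
move=> h; have : ((a - b)%N%:R : K) = 0 by rewrite natrB // h subrr.
move/eqP; rewrite h0 subn_eq0 => hab; apply/eqP; rewrite eqn_leq hab.
exact: le.
Qed.

Lemma sum_delta (A : comNzRingType) (M : lmodType A) n (b : 'I_n -> M) i :
  \sum_j (1%:M : 'M[A]_n) j i *: b j = b i.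
Proof.
rewrite (bigD1 i) //= big1 ?addr0; first by rewrite mxE eqxx scale1r.
by move=> j hj; rewrite mxE (negbTE hj) scale0r.
Qed.

Lemma nabla_sum (K : fieldType) (A : comAlgType K) (M : lmodType A) (d : A -> A) (nabla : M -> M)
  (hM : diff_module d nabla) (I : Type) (r : seq I) (F : I -> M) :
  nabla (\sum_(i <- r) F i) = \sum_(i <- r) nabla (F i).
Proof.
have h0 : nabla 0 = 0.
  have h := proj1 hM 0 0; rewrite addr0 in h.
  by apply: (addrI (nabla 0)); rewrite -h addr0.
exact: (big_morph nabla (proj1 hM) h0).
Qed.

Theorem mainTheorem15
  (K : closedFieldType) (hK : [pchar K] =i pred0)
  (rep : K -> K) (ip : K -> int) (hrep : reps_KZ rep ip)
  (A : comAlgType K) (t ti : A) (d : A -> A)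
  (hL : laurent_subring t ti) (hd : derivation_ext t d)
  (hA : no_exp_no_log rep d)
  (M : lmodType A) (nabla : M -> M) (hM : diff_module d nabla)
  (hrs : regular_singular t ti d rep ip nabla)
  (n : nat) (b b' : 'I_n -> M) (hb : is_basis b) (hb' : is_basis b')
  (G G' : 'M[K]_n)
  (hG : conn_matrix nabla b (map_mx (in_alg A) G))
  (hG' : conn_matrix nabla b' (map_mx (in_alg A) G'))
  (s s' : seq K)
  (hs : char_poly G = \prod_(x <- s) ('X - x%:P))
  (hs' : char_poly G' = \prod_(x <- s') ('X - x%:P)) :
  perm_eq (map rep s) (map rep s').
Proof.
have hz := @scal_zero K A t ti d hd (proj1 hL) rep ip hrep hA.
apply/permP => a; rewrite !count_map.
have hS : forall y (z : int), preim rep a (y + z%:~R) = preim rep a y.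
  by case: hrep => _ hsh _ y z; rewrite /= hsh.
move: b b' hb hb' G G' hG hG' hs hs'.
case: n => [|m] b b' hb hb' G G' hG hG' hs hs'.
  have : size s = 0%N by move: (size_char_poly G); rewrite hs size_prod_XsubC => -[].
  have : size s' = 0%N by move: (size_char_poly G'); rewrite hs' size_prod_XsubC => -[].
  by case: s {hs} => // ; case: s' {hs'}.
have [cP hcP] : exists cP : 'I_m.+1 -> 'I_m.+1 -> A,
    forall i, b' i = \sum_k cP i k *: b k.
  exact: (fin_all_exists (fun i => proj1 hb (b' i))).
have [cQ hcQ] : exists cQ : 'I_m.+1 -> 'I_m.+1 -> A,
    forall i, b i = \sum_k cQ i k *: b' k.
  exact: (fin_all_exists (fun i => proj1 hb' (b i))).
pose P : 'M[A]_m.+1 := \matrix_(k, i) cP i k.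
pose Q : 'M[A]_m.+1 := \matrix_(k, i) cQ i k.
have hPQ : P *m Q = 1%:M.
  apply/matrixP => j i.
  apply: (@basis_uniq _ _ _ _ (proj2 hb) (fun j => (P *m Q) j i) (fun j => (1%:M : 'M[A]_m.+1) j i) _ j).
  rewrite (@sum_delta _ _ _ b).
  rewrite [in RHS]hcQ.
  under [RHS]eq_bigr do rewrite hcP.
  rewrite (@sum_swap _ _ _ b); apply: eq_bigr => k _; congr (_ *: _).
  by rewrite mxE; apply: eq_bigr => l _; rewrite !mxE.
have hPd : dm d P = P *m map_mx (in_alg A) G' - map_mx (in_alg A) G *m P.
  apply/matrixP => j i.
  have N1 : nabla (b' i) = \sum_j (P *m map_mx (in_alg A) G') j i *: b j.
    rewrite hG'; under eq_bigr do rewrite hcP.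
    rewrite (@sum_swap _ _ _ b); apply: eq_bigr => k _; congr (_ *: _).
    by rewrite mxE; apply: eq_bigr => l _; rewrite !mxE.
  have N2 : nabla (b' i) =
      \sum_j (d (P j i) + (map_mx (in_alg A) G *m P) j i) *: b j.
    rewrite [in LHS]hcP (@nabla_sum _ _ _ _ _ hM).
    under eq_bigr do rewrite (proj2 hM) hG.
    rewrite big_split /= (@sum_swap _ _ _ b).
    under [RHS]eq_bigr do rewrite scalerDl.
    rewrite big_split /=; congr (_ + _).
      by apply: eq_bigr => k _; rewrite mxE.
    apply: eq_bigr => k _; congr (_ *: _).
    by rewrite mxE; apply: eq_bigr => l _; rewrite !mxE mulrC.
  have := @basis_uniq _ _ _ _ (proj2 hb) _ _ (etrans (esym N1) N2) j.
  by rewrite !mxE => ->; rewrite addrK.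
have := @count_eq K A t d hd hz m G G' s s' hs hs' P Q hPQ hPd (preim rep a) hS.
rewrite -!natrX => /(@natr_inj0 _ hK).
exact: expnI.
Qed.
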